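(* Let $\pi=(x_1,\dots,x_n)$ be a circular ordering of $X$ and let $\delta=\sum_{S}\lambda_S\delta_S$, the sum over all splits $S$ of $X$ that are circular with respect to $\pi$, with $\lambda_S\ge0$ for all such $S$ and $\lambda_S>0$ for every such split both of whose blocks have at least two elements (a generic circular decomposable metric). Then for every circular ordering $\sigma=(y_1,\dots,y_n)$ of $X$ different from $\pi$ (up to rotation and reversal), \[ \frac12\sum_{k=1}^n\delta(y_k,y_{k+1}) \;>\; \frac12\sum_{k=1}^n\delta(x_k,x_{k+1}). \]
   Context: $X=\{1,\dots,n\}$. A circular ordering is a listing $(x_1,\dots,x_n)$ of $X$ regarded cyclically ($x_{n+1}=x_1$); two listings are identified if they differ by rotation or reversal. A split $S=\{A,B\}$ is a partition of $X$ into two nonempty blocks; its split pseudometric is $\delta_S(x,y)=0$ if $x,y$ lie in the same block and $1$ otherwise. A split is circular with respect to $\pi$ if both of its blocks are contiguous arcs of $\pi$, i.e. it has the form $\{\{x_{i+1},\dots,x_j\},\{x_{j+1},\dots,x_i\}\}$ with indices read cyclically. The quantity $\frac12\sum_k\delta(y_k,y_{k+1})$ is the balanced length of $\delta$ with respect to the circular ordering $\sigma$ (half the length of the traveling salesman tour $\sigma$). *)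

(* Defs.v *)
(* X = {1..n} is modelled by 'I_n (elements 0..n-1). *)
From mathcomp Require Import all_boot all_order all_algebra all_fingroup.
Set Implicit Arguments. Unset Strict Implicit. Unset Printing Implicit Defensive.
Import Order.TTheory GRing.Theory Num.Theory.

(* A circular ordering is a listing (x_1,...,x_n) of X, i.e. a bijection
   pi : positions -> X, positions 'I_n read cyclically (successor = ordS). *)

Definition same_circular n (pi sigma : 'S_n) : Prop :=
  exists r : nat,
    (forall i : 'I_n, sigma i = pi (iter r (@ordS n) i)) \/
    (forall i : 'I_n, sigma i = pi (iter r (@ordS n) (rev_ord i))).

Definition is_split n (S : {set {set 'I_n}}) : bool :=
  [exists A : {set 'I_n}, [&& A != set0, A != setT & S == [set A; ~: A]]].

Definition split_pm n (S : {set {set 'I_n}}) (x y : 'I_n) : nat :=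
  if [exists A in S, (x \in A) && (y \in A)] then 0 else 1.

Definition arc n (pi : 'S_n) (i : 'I_n) (k : nat) : {set 'I_n} :=
  [set pi (iter t (@ordS n) i) | t : 'I_n & t < k].

Definition is_arc n (pi : 'S_n) (A : {set 'I_n}) : bool :=
  [exists i : 'I_n, exists k : 'I_n.+1, A == arc pi i k].

Definition circular_split n (pi : 'S_n) (S : {set {set 'I_n}}) : bool :=
  is_split S && [forall A in S, is_arc pi A].

Definition circ_metric (R : pzRingType) n (pi : 'S_n)
    (lambda : {set {set 'I_n}} -> R) (x y : 'I_n) : R :=
  \sum_(S : {set {set 'I_n}} | circular_split pi S) lambda S * (split_pm S x y)%:R.

Definition balanced_length (R : fieldType) n (d : 'I_n -> 'I_n -> R) (sigma : 'S_n) : R :=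
  (\sum_(k : 'I_n) d (sigma k) (sigma (ordS k))) / 2%:R.

(* Main.v *)
Require Import Defs.
From mathcomp Require Import all_boot all_order all_algebra all_fingroup.
From mathcomp Require Import zify.
Set Implicit Arguments. Unset Strict Implicit. Unset Printing Implicit Defensive.
Import Order.TTheory GRing.Theory Num.Theory.
Local Open Scope ring_scope.

Section Cyc.
Variable m : nat.
Local Notation N := m.+1.
Local Notation w t := ((Zp1 : 'I_N) *+ t).

Lemma ordSE (i : 'I_N) : ordS i = i + Zp1.
Proof. by apply: val_inj => /=; rewrite modnDmr addn1. Qed.

Lemma val_w t : val (w t) = (t %% N)%N.
Proof. by rewrite Zp_mulrn /= modnMml mul1n. Qed.

Lemma w_val (x : 'I_N) : w (val x) = x.
Proof. by apply: val_inj; rewrite val_w modn_small ?ltn_ord. Qed.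

Lemma iter_ordS t (i : 'I_N) : iter t (@ordS N) i = i + w t.
Proof.
elim: t => [|t IH]; first by rewrite mulr0n addr0.
by rewrite iterS IH ordSE mulrS (addrC Zp1) addrA.
Qed.

Lemma val_add (x y : 'I_N) : val (x + y) = ((x + y) %% N)%N.
Proof. by []. Qed.

Lemma val_opp (x : 'I_N) : val (- x) = ((N - x) %% N)%N.
Proof. by []. Qed.

Lemma val_sub (x y : 'I_N) : val (x - y) = ((x + (N - y)) %% N)%N.
Proof. by rewrite val_add val_opp modnDmr. Qed.

Lemma arc_mem (pi : 'S_N) (i p : 'I_N) (k : nat) : (k <= N)%N ->
  (pi p \in Defs.arc pi i k) = (val (p - i)%R < k)%N.
Proof.
move=> hk; apply/imsetP/idP => [[t] | h].
  rewrite inE => tk /perm_inj ->; rewrite iter_ordS addrC addKr val_w modn_small //.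

exists (Ordinal (leq_trans h hk)); first by rewrite inE.
rewrite iter_ordS (_ : Ordinal (leq_trans h hk) = p - i); last by apply: val_inj.
by rewrite w_val addrC subrK.
Qed.

Lemma val_Zp1 : val (Zp1 : 'I_N) = (1 %% N)%N.
Proof. by []. Qed.

Lemma Zp1E : (Zp1 : 'I_N) = w 1.
Proof. by rewrite mulr1n. Qed.

Lemma val_eq_w (p : 'I_N) c : val p = c -> p = w c.
Proof. by move=> <-; rewrite w_val. Qed.

Definition cr (g : 'I_N -> bool) : nat := (\sum_(k : 'I_N) (g k != g (ordS k)))%N.

Lemma exists_exit (g : 'I_N -> bool) x y : g x -> ~~ g y ->
  exists k, g k && ~~ g (ordS k).
Proof.
move=> gx gy; case: (pickP (fun k => g k && ~~ g (ordS k))) => [k hk | none].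
  by exists k.
have H : forall t, g (iter t (@ordS N) x).
  elim=> //= t IH; move: (none (iter t (@ordS N) x)); rewrite IH /=.
  by move/negbFE.
by move: (H (val (y - x)%R)); rewrite iter_ordS w_val addrC subrK (negbTE gy).
Qed.

Lemma sum_eq1 (a : 'I_N) : (\sum_(p : 'I_N) (p == a) = 1)%N.
Proof.
rewrite (bigD1 a) //= eqxx big1 // => q /negbTE -> //.
Qed.

Lemma cr_ge2 (g : 'I_N -> bool) x y : g x -> ~~ g y -> (2 <= cr g)%N.
Proof.
move=> gx gy.
have [k1 /andP [h1 h1']] := exists_exit gx gy.
have [k2 /andP [h2 h2']] := exists_exit (g := fun z => ~~ g z) gy (introT negPn gx).
have k21 : k2 != k1 by apply/eqP => e; move: h2; rewrite e h1.
rewrite /cr (bigD1 k1) //= (bigD1 k2) //=.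
by rewrite h1 (negbTE h1') (negbTE h2) (negbNE h2').
Qed.

Lemma cr_ge3 (g : 'I_N -> bool) a b c : a != b -> a != c -> b != c ->
  g a != g (ordS a) -> g b != g (ordS b) -> g c != g (ordS c) -> (3 <= cr g)%N.
Proof.
move=> ab ac bc ha hb hc.
rewrite /cr (bigD1 a) //= (bigD1 b) /=; last by rewrite eq_sym ab.
rewrite (bigD1 c) /=; last by rewrite eq_sym ac eq_sym bc.
by rewrite ha hb hc.
Qed.

Lemma val_subS (p i : 'I_N) : val (ordS p - i)%R = ((val (p - i)%R).+1 %% N)%N.
Proof.
rewrite ordSE addrAC val_add /= modnDmr addn1 //.
Qed.

Lemma cr_arc (i : 'I_N) k : (k <= N)%N ->
  (cr (fun p => val (p - i)%R < k) <= 2)%N.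
Proof.
move=> hk; rewrite /cr.
apply: (@leq_trans (\sum_(p : 'I_N) ((p == (i + w k.-1)%R) + (p == (i + w m)%R)))%N).
  apply: leq_sum => p _; rewrite val_subS.
  have hx : (val (p - i)%R < N)%N := ltn_ord _.
  case: (ltnP (val (p - i)%R).+1 N) => hx1.
    rewrite (modn_small hx1).
    case: ((val (p - i)%R) =P k.-1) => e.
      have ep : p = i + w k.-1 by rewrite -e w_val addrC subrK.
      by rewrite -ep eqxx; case: (_ != _).
    by case: ltnP => h1; case: ltnP => h2 //=; exfalso; lia.
  have e : val (p - i)%R = m by lia.
  have ep : p = i + w (val (p - i)%R) by rewrite w_val addrC subrK.
  rewrite e in ep.
  by rewrite -ep eqxx addn1; case: (_ != _).
by rewrite big_split /= !sum_eq1.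
Qed.

Lemma w_inj s t : (s < N)%N -> (t < N)%N -> w s = w t -> s = t.
Proof.
by move=> hs ht /(congr1 val); rewrite !val_w !modn_small.
Qed.

Lemma split_decomp (S : {set {set 'I_N}}) : is_split S ->
  exists A, [/\ A != set0, A != setT & S = [set A; ~: A]].
Proof.
by case/existsP => A /and3P [h1 h2 /eqP h3]; exists A.
Qed.

Lemma split_pmE (A : {set 'I_N}) x y :
  split_pm [set A; ~: A] x y = ((x \in A) != (y \in A)) :> nat.
Proof.
rewrite /split_pm.
have -> : [exists B in [set A; ~: A], (x \in B) && (y \in B)] = ((x \in A) == (y \in A)).
  apply/existsP/idP => [[B /andP [/set2P [->|->] /andP [hx hy]]] | h].
    by rewrite hx hy.
    by move: hx hy; rewrite !inE => /negbTE -> /negbTE ->.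
  case hx : (x \in A); move: h; rewrite hx => h.
    by exists A; rewrite !inE eqxx hx -(eqP h).
  exists (~: A); rewrite !inE eqxx orbT /= hx.
  by move: h; case: (y \in A).
by case: (_ == _).
Qed.

Lemma prog (f : 'I_N -> 'I_N) : injective f ->
  (forall i, f (i + Zp1) - f i = Zp1 \/ f (i + Zp1) - f i = - Zp1) ->
  (forall x, f x = f 0 + x) \/ (forall x, f x = f 0 - x).
Proof.
move=> finj hf.
set e := f Zp1 - f 0.
have he : e = Zp1 \/ e = - Zp1 by have := hf 0; rewrite add0r.
have key : forall t, (t.+1 < N)%N ->
    f (w t) = f 0 + e *+ t /\ f (w t.+1) = f 0 + e *+ t.+1.
  elim=> [|t IH] ht.
    split; first by rewrite !mulr0n addr0.
    by rewrite -Zp1E mulr1n /e addrC subrK.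
  have [IH0 IH1] := IH ltac:(lia); split => //.
  have d := hf (w t.+1); rewrite -mulrSr in d.
  have [de | dne] := eqVneq (f (w t.+2) - f (w t.+1)) e.
    by rewrite [e *+ _]mulrSr addrA -IH1 -de addrC subrK.
  have dme : f (w t.+2) - f (w t.+1) = - e.
    by case: d he dne => -> [] ->; rewrite ?opprK ?eqxx.
  have : f (w t.+2) = f (w t).
    rewrite IH0 -(subrK (f (w t.+1)) (f (w t.+2))) dme IH1 [e *+ t.+1]mulrSr addrA.
    by rewrite addrC addrA addrK addrC.
  move/finj/w_inj => hh; have := hh ltac:(lia) ltac:(lia); lia.
have key' : forall t, (t < N)%N -> f (w t) = f 0 + e *+ t.
  case=> [|t] ht; first by rewrite !mulr0n addr0.
  exact: (key t ht).2.
have fx : forall x, f x = f 0 + e *+ val x.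
  by move=> x; rewrite -key' ?w_val ?ltn_ord.
case: he => he; [left | right] => x; rewrite fx he.
  by rewrite w_val.
by rewrite mulNrn w_val.
Qed.

Lemma rev_ordE (j : 'I_N) : rev_ord j = - (j + Zp1).
Proof.
apply/eqP; rewrite -subr_eq0 opprK; apply/eqP; apply: val_inj.
rewrite /= modnDmr addnA addnC addnA -addnA modnDml.
have -> : (1 + (N - j.+1 + j) = N)%N by have := ltn_ord j; lia.
by rewrite modnn.
Qed.

Lemma same_circ_of (pi sigma : 'S_N) :
  (forall i, (sigma^-1)%g (pi (i + Zp1)) - (sigma^-1)%g (pi i) = Zp1 \/
             (sigma^-1)%g (pi (i + Zp1)) - (sigma^-1)%g (pi i) = - Zp1) ->
  same_circular pi sigma.
Proof.
move=> h.
have finj : injective (fun i => (sigma^-1)%g (pi i)).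
  by move=> a b /perm_inj /perm_inj.
set c := (sigma^-1)%g (pi 0).
case: (prog finj h) => hp.
  exists (val (- c)); left => j; rewrite iter_ordS w_val.
  have := hp (j - c); rewrite -/c [c + _]addrC subrK => /(congr1 sigma).
  by rewrite permKV => ->.
exists (val (c + Zp1)); right => j; rewrite iter_ordS w_val rev_ordE.
have := hp (c - j); rewrite -/c opprB [c + (j - c)]addrC subrK => /(congr1 sigma).
rewrite permKV => <-; congr (pi _).
by rewrite opprD addrACA addNr addr0 addrC.
Qed.

Definition Fs (sigma : 'S_N) (S : {set {set 'I_N}}) : nat :=
  (\sum_(k : 'I_N) split_pm S (sigma k) (sigma (ordS k)))%N.

Lemma Fs_cr sigma A : Fs sigma [set A; ~: A] = cr (fun k => sigma k \in A).
Proof. by apply: eq_bigr => k _; rewrite split_pmE. Qed.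

Lemma addr_eql (x y : 'I_N) : (x + y == x) = (y == 0).
Proof. by rewrite -{2}(addr0 x) (inj_eq (@addrI _ x)). Qed.

Lemma Zp1_neq0 : (1 < N)%N -> (Zp1 : 'I_N) != 0.
Proof. by move=> h; apply/eqP => /(congr1 val) /=; rewrite modn_small. Qed.

Lemma permE_eq (sigma : 'S_N) q a : (sigma q == a) = (q == (sigma^-1)%g a).
Proof. by rewrite -{1}(permKV sigma a) (inj_eq (@perm_inj _ sigma)). Qed.

Lemma arc2E (pi : 'S_N) i : (1 < N)%N ->
  Defs.arc pi i 2 = [set pi i; pi (i + Zp1)].
Proof.
move=> hN; apply/setP => x; rewrite -(permKV pi x) arc_mem // !inE.
rewrite !(inj_eq (@perm_inj _ pi)).
apply/idP/orP => [h | [/eqP->|/eqP->]].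
- case e : (val (_ - i)%R) h => [|[|?]] // _.
    by left; rewrite -subr_eq0; apply/eqP/val_inj.
  right; apply/eqP; rewrite -(subrK i ((pi^-1)%g x)) addrC; congr (_ + _).
  by apply: val_inj; rewrite e /= modn_small.
- by rewrite subrr.
- by rewrite [i + _]addrC addrK /= modn_small.
Qed.

Lemma adj_big (pi sigma : 'S_N) i : (3 < N)%N ->
  (Fs sigma [set Defs.arc pi i 2; ~: Defs.arc pi i 2] <= 2)%N ->
  (sigma^-1)%g (pi (i + Zp1)) - (sigma^-1)%g (pi i) = Zp1 \/
  (sigma^-1)%g (pi (i + Zp1)) - (sigma^-1)%g (pi i) = - Zp1.
Proof.
move=> hN H; rewrite Fs_cr arc2E in H; last by lia.
set q1 := (sigma^-1)%g (pi i) in H *; set q2 := (sigma^-1)%g (pi (i + Zp1)) in H *.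
have gE : forall k, (sigma k \in [set pi i; pi (i + Zp1)]) = (k == q1) || (k == q2).
  by move=> k; rewrite !inE !permE_eq.
have z1 : (Zp1 : 'I_N) != 0 by apply: Zp1_neq0; lia.
have q12 : q1 != q2.
  apply/eqP => /perm_inj /perm_inj /eqP; rewrite eq_sym addr_eql.
  by rewrite (negbTE z1).
case: (eqVneq (q2 - q1) Zp1) => [->|h1]; first by left.
case: (eqVneq (q2 - q1) (- Zp1)) => [->|h2]; first by right.
exfalso.
have a1 : q1 - Zp1 != q1 by rewrite addr_eql oppr_eq0.
have a2 : q1 - Zp1 != q2.
  by apply: contra h2 => /eqP <-; rewrite addrAC subrr add0r.
have b1 : q1 + Zp1 != q1 by rewrite addr_eql.
have b2 : q1 + Zp1 != q2.
  by apply: contra h1 => /eqP <-; rewrite [q1 + _]addrC addrK.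
have c1 : q2 + Zp1 != q2 by rewrite addr_eql.
have c2 : q2 + Zp1 != q1.
  by apply: contra h2 => /eqP <-; rewrite opprD addrA subrr add0r.
have := @cr_ge3 (fun k => sigma k \in [set pi i; pi (i + Zp1)]) (q1 - Zp1) q1 q2 a1 a2 q12.
rewrite !ordSE !gE subrK eqxx (negbTE a1) (negbTE a2) (negbTE b1) (negbTE b2).
rewrite (negbTE c1) (negbTE c2) (negbTE q12) (eq_sym q2 q1) (negbTE q12) eqxx /=.
by move=> /(_ isT isT isT); rewrite ltnNge H.
Qed.

Lemma arcC (pi : 'S_N) i k : (0 < k < N)%N ->
  ~: Defs.arc pi i k = Defs.arc pi (i + w k) (N - k).
Proof.
move=> hk; apply/setP => x; rewrite -(permKV pi x) inE !arc_mem; try lia.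
set p := (pi^-1)%g x.
rewrite opprD addrA; set z := (p - i).
rewrite (val_sub z (w k)) val_w (modn_small (m := k)); last by lia.
have hy : (val z < N)%N := ltn_ord _.
move: hy; set y := val z => hy.
have yE : nat_of_ord z = y by [].
rewrite yE.
case: (leqP k y) => h.
  rewrite (_ : (y + (N - k)) = y - k + N)%N; last by lia.
  rewrite modnDr modn_small; last by lia.
  apply/idP/idP; lia.
rewrite modn_small; last by lia.
apply/idP/idP; lia.
Qed.

Lemma is_arc_arc (pi : 'S_N) i k : (k <= N)%N -> is_arc pi (Defs.arc pi i k).
Proof.
move=> hk; apply/existsP; exists i; apply/existsP; exists (inord k).
by rewrite inordK.
Qed.

Lemma circ_arc2 (pi : 'S_N) i : (3 < N)%N ->
  [&& circular_split pi [set Defs.arc pi i 2; ~: Defs.arc pi i 2] &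
   [forall B in [set Defs.arc pi i 2; ~: Defs.arc pi i 2], 1 < #|B|]]%N.
Proof.
move=> hN.
have m2 : forall t, (t < N)%N -> (pi (i + w t) \in Defs.arc pi i 2) = (t < 2)%N.
  by move=> t ht; rewrite arc_mem; [rewrite [i + _]addrC addrK val_w modn_small | lia].
rewrite /circular_split -andbA; apply/and3P; split.
- apply/existsP; exists (Defs.arc pi i 2); rewrite eqxx andbT; apply/andP; split.
    by apply/set0Pn; exists (pi (i + w 0)); rewrite m2.
  apply/eqP => e; have := m2 2%N ltac:(lia); rewrite e inE => //.
- apply/forall_inP => B /set2P [->|->]; first by apply: is_arc_arc; lia.
  rewrite arcC; last by lia.
  by apply: is_arc_arc; lia.
- apply/forall_inP => B /set2P [->|->]; apply/card_gt1P.
    exists (pi (i + w 0)), (pi (i + w 1)); rewrite !m2 //; try lia.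
    split => //; rewrite (inj_eq (@perm_inj _ pi)) (inj_eq (@addrI _ i)).
    by apply/eqP => /w_inj; lia.
  exists (pi (i + w 2)), (pi (i + w 3)); rewrite !inE !m2 //; try lia.
  split => //; rewrite (inj_eq (@perm_inj _ pi)) (inj_eq (@addrI _ i)).
  by apply/eqP => /w_inj; lia.
Qed.

Lemma adj_small (pi sigma : 'S_N) i : (N <= 3)%N ->
  (sigma^-1)%g (pi (i + Zp1)) - (sigma^-1)%g (pi i) = Zp1 \/
  (sigma^-1)%g (pi (i + Zp1)) - (sigma^-1)%g (pi i) = - Zp1.
Proof.
move=> hN.
set d := _ - _.
have hd : (val d < N)%N := ltn_ord d.
case: (eqVneq m 0) => hm.
  left; apply: val_inj.
  have -> : val (Zp1 : 'I_N) = 0%N by rewrite /= hm.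
  lia.
have z1 : (Zp1 : 'I_N) != 0 by apply: Zp1_neq0; lia.
have dn0 : d != 0.
  rewrite subr_eq0; apply/eqP => /perm_inj /perm_inj /eqP; rewrite addr_eql.
  by rewrite (negbTE z1).
have vd : val d != 0%N by apply: contra dn0 => /eqP h; apply/eqP/val_inj.
have v1 : val (Zp1 : 'I_N) = 1%N by rewrite /= modn_small //; lia.
have v2 : val (- (Zp1 : 'I_N)) = m by rewrite val_opp v1 modn_small //; lia.
case: (eqVneq (val d) 1%N) => h1.
  by left; apply: val_inj; rewrite h1 v1.
right; apply: val_inj; rewrite v2; lia.
Qed.
End Cyc.

Theorem mainTheorem13 (R : realFieldType) (n : nat) (pi : 'S_n)
    (lambda : {set {set 'I_n}} -> R)
    (hnneg : forall S, circular_split pi S -> 0 <= lambda S)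
    (hpos : forall S, circular_split pi S ->
        (forall A, A \in S -> (2 <= #|A|)%N) -> 0 < lambda S)
    (sigma : 'S_n) (hsig : ~ same_circular pi sigma) :
  balanced_length (circ_metric pi lambda) pi <
  balanced_length (circ_metric pi lambda) sigma.
Proof.
case: n pi lambda hnneg hpos sigma hsig => [|m] pi lambda hnneg hpos sigma hsig.
  by exfalso; apply: hsig; exists 0%N; left; case.
have Ldec : forall s : 'S_m.+1, \sum_(k : 'I_m.+1) circ_metric pi lambda (s k) (s (ordS k))
    = \sum_(S | circular_split pi S) lambda S * (Fs s S)%:R.
  move=> s; rewrite /circ_metric exchange_big; apply: eq_bigr => S _.
  by rewrite /Fs natr_sum mulr_sumr.
have Fpi : forall S, circular_split pi S -> (Fs pi S <= 2)%N.
  move=> S /andP [/split_decomp [A [h1 h2 ->]] /forall_inP harc].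
  have := harc A; rewrite !inE eqxx => /(_ isT) /existsP [i /existsP [k /eqP eA]].
  rewrite Fs_cr eA; apply: leq_trans (cr_arc i (ltn_ord k)).
  rewrite /cr; apply/eq_leq/eq_bigr => p _.
  by rewrite !arc_mem //; have := ltn_ord k.
have Fsig : forall S, circular_split pi S -> (2 <= Fs sigma S)%N.
  move=> S /andP [/split_decomp [A [h1 h2 ->]] _].
  have [x hx] := set0Pn _ h1.
  have [y hy] : exists y, y \notin A.
    case: (pickP (fun y => y \notin A)) => [y hy | none]; first by exists y.
    by exfalso; move/negP: h2; apply; apply/eqP/setP => z; rewrite inE; move: (none z) => /negbFE.
  rewrite Fs_cr; apply: (@cr_ge2 _ _ ((sigma^-1)%g x) ((sigma^-1)%g y)); rewrite permKV //.
have [S0 hS0 | none] := pickP (fun S => [&& circular_split pi S,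
    [forall B in S, 1 < #|B|] & 2 < Fs sigma S]%N).
  case/and3P: hS0 => hc hb h3.
  rewrite /balanced_length ltr_pM2r ?invr_gt0 ?ltr0n // !Ldec.
  apply: (@le_lt_trans _ _ (\sum_(S | circular_split pi S) lambda S * 2%:R)).
    apply: ler_sum => S hS; apply: ler_wpM2l; [exact: hnneg | rewrite ler_nat; exact: Fpi].
  rewrite (bigD1 S0) //= [X in _ < X](bigD1 S0) //=.
  apply: ltr_leD.
    rewrite ltr_pM2l; first by rewrite ltr_nat.
    by apply: hpos => // A hA; exact: (forall_inP hb A hA).
  apply: ler_sum => S /andP [hS _]; apply: ler_wpM2l; [exact: hnneg | rewrite ler_nat; exact: Fsig].
exfalso; apply: hsig; apply: same_circ_of => i.
case: (leqP m.+1 3) => hN; first exact: adj_small.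
apply: adj_big => //.
have /andP [hc hb] := circ_arc2 pi i hN.
by move: (none [set Defs.arc pi i 2; ~: Defs.arc pi i 2]); rewrite hc hb /= => /negbT; rewrite -leqNgt.
Qed.
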